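(* Let $S$ be a stacked $2$-sphere, $\alpha=abc$ and $\beta=abd$ two triangles of $S$, and $\overline{\alpha},\overline{\beta}$ the unique tetrahedra of $\overline{S}$ containing $\alpha,\beta$. Let $\sigma$ be a tetrahedron of $\overline{S}$ which is a node of degree four in $\Lambda(\overline{S})$, and let $G_1,G_2,G_3,G_4$ be the connected components of $\Lambda(\overline{S})-\sigma$. If the $2$-sphere $T$ obtained from $S$ by the edge flip $ab\mapsto cd$ is also a stacked $2$-sphere, then: (i) $\sigma$ is a tetrahedron of $\overline{T}$; (ii) $\sigma$ is a node of degree four in $\Lambda(\overline{T})$; (iii) $\overline{\alpha}$ and $\overline{\beta}$ lie in the same component of $\Lambda(\overline{S})-\sigma$, say $G_4$; and (iv) the components of $\Lambda(\overline{T})-\sigma$ are $G_1,G_2,G_3,G_4'$ for some tree $G_4'$.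
   Context: A triangulated $2$-sphere is a finite simplicial complex whose geometric realization is homeomorphic to the $2$-sphere. Edge flip $ab\mapsto cd$: if $abc,abd$ are triangles and $cd$ is not an edge, replace $abc,abd$ by $acd,bcd$. A stacked $3$-ball is a simplicial complex obtained from a single tetrahedron by repeatedly gluing a new tetrahedron along exactly one boundary triangle, introducing one new vertex each time. A stacked $2$-sphere is a triangulated $2$-sphere isomorphic to the boundary of a stacked $3$-ball. For a stacked $2$-sphere $S$, $\overline{S}$ denotes the simplicial complex whose faces are all cliques of the edge graph of $S$; it is known that $\overline{S}$ is a stacked $3$-ball with boundary $S$, unique up to isomorphism. Each triangle $\alpha$ of $S$ lies in a unique tetrahedron $\overline{\alpha}$ of $\overline{S}$. The dual graph $\Lambda(C)$ of a complex made of tetrahedra has the tetrahedra as nodes, adjacent iff they share a triangle; $\Lambda(C)-\sigma$ is the graph with node $\sigma$ deleted. *)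

(* Defs.v *)
From HB Require Import structures.
From mathcomp Require Import all_boot.
Set Implicit Arguments. Unset Strict Implicit. Unset Printing Implicit Defensive.

(* A pure 2-/3-dimensional simplicial complex is represented by its set of
   facets (triangles, resp. tetrahedra), each a finite set of vertices. *)

Section Defs.
Variable W : finType.

Definition boundary (B : {set {set W}}) : {set {set W}} :=
  [set tri : {set W} | (#|tri| == 3) && (#|[set s in B | tri \subset s]| == 1)].

Inductive stacked_ball : {set {set W}} -> Prop :=
| sb_base (t : {set W}) : #|t| = 4 -> stacked_ball [set t]
| sb_step (B : {set {set W}}) (tri : {set W}) (v : W) :
    stacked_ball B -> tri \in boundary B ->
    (forall s, s \in B -> v \notin s) ->
    stacked_ball ((v |: tri) |: B).
End Defs.

Definition stacked_sphere (V : finType) (S : {set {set V}}) : Prop :=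
  exists (W : finType) (f : V -> W), injective f /\
    exists B : {set {set W}}, stacked_ball B /\
      boundary B = [set f @: (tri : {set V}) | tri in S].

Section Sbar.
Variable V : finType.

Definition is_edge (S : {set {set V}}) (x y : V) : bool :=
  [exists tri in S, (x \in tri) && (y \in tri)].

Definition sbar_tets (S : {set {set V}}) : {set {set V}} :=
  [set t : {set V} | (#|t| == 4) &&
     [forall x in t, forall y in t, (x != y) ==> is_edge S x y]].

Definition dual_adj (s t : {set V}) : bool := #|s :&: t| == 3.

Definition dual_adj_minus (C : {set {set V}}) (sigma : {set V}) : rel {set V} :=
  fun s t => [&& s \in C, t \in C, s != sigma, t != sigma & dual_adj s t].

Definition dual_deg (C : {set {set V}}) (sigma : {set V}) : nat :=
  #|[set t in C | dual_adj sigma t]|.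

Definition comps_minus (C : {set {set V}}) (sigma : {set V}) : {set {set {set V}}} :=
  [set [set t in C :\ sigma | connect (dual_adj_minus C sigma) s t]
    | s in C :\ sigma].

Definition dual_tree (G : {set {set V}}) : Prop :=
  G != set0 /\
  {in G &, forall x y,
     connect (fun s t => [&& s \in G, t \in G & dual_adj s t]) x y} /\
  ~ (exists c : seq {set V},
       [&& all (fun s => s \in G) c, 3 <= size c & ucycleb dual_adj c]).

Definition flip (S : {set {set V}}) (a b c d : V) : {set {set V}} :=
  [set [set a; c; d]; [set b; c; d]] :|: ((S :\ [set a; b; c]) :\ [set a; b; d]).
End Sbar.

(* Main.v *)
Require Import Defs.
From mathcomp Require Import all_boot zify.
Set Implicit Arguments. Unset Strict Implicit. Unset Printing Implicit Defensive.

Section Ball.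
Variable W : finType.
Implicit Types (B : {set {set W}}) (t s T tri : {set W}) (x y v : W).

Definition Et B x y := [exists t in B, (x \in t) && (y \in t)].

Lemma EtP B x y : reflect (exists2 t, t \in B & (x \in t) && (y \in t)) (Et B x y).
Proof. exact: (iffP exists_inP) => [[t]|[t]]; exists t. Qed.

Lemma bd_sub B T : T \in boundary B -> exists2 t, t \in B & T \subset t.
Proof.
rewrite inE => /andP[_ /eqP h].
have : 0 < #|[set s in B | T \subset s]| by rewrite h.
by case/card_gt0P => t; rewrite inE => /andP[]; exists t.
Qed.

Lemma bd_card B T : T \in boundary B -> #|T| = 3.
Proof. by rewrite inE => /andP[/eqP]. Qed.

Lemma bd_uniq B T t1 t2 : T \in boundary B -> t1 \in B -> t2 \in B ->
  T \subset t1 -> T \subset t2 -> t1 = t2.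
Proof.
rewrite inE => /andP[_ /cards1P[u hu]] h1 h2 s1 s2.
have : t1 \in [set s in B | T \subset s] by rewrite inE h1 s1.
have : t2 \in [set s in B | T \subset s] by rewrite inE h2 s2.
by rewrite hu !inE => /eqP -> /eqP ->.
Qed.

Lemma pick_other (A : {set W}) x y : 2 < #|A| -> exists w, [/\ w \in A, w != x & w != y].
Proof.
move=> h.
have : 0 < #|A :\ x :\ y|.
  have := cardsD1 x A; have := cardsD1 y (A :\ x). lia.
by case/card_gt0P => w; rewrite !inE => /and3P[? ? ?]; exists w.
Qed.

Section Step.
Variables (B : {set {set W}}) (tri : {set W}) (v : W).
Hypothesis hB4 : forall t, t \in B -> #|t| = 4.
Hypothesis htri : tri \in boundary B.
Hypothesis hv : forall s, s \in B -> v \notin s.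
Let new := v |: tri.

Lemma vtri : v \notin tri.
Proof. by case: (bd_sub htri) => t tB sub; apply: contra (hv tB); apply: (subsetP sub). Qed.

Lemma card_new : #|new| = 4.
Proof. by rewrite cardsU1 vtri (bd_card htri). Qed.

Lemma new_notin : new \notin B.
Proof. by apply/negP => /hv; rewrite setU11. Qed.

Lemma Et_step x y : Et (new |: B) x y = Et B x y || ((x \in new) && (y \in new)).
Proof.
apply/EtP/orP => [[t]|[/EtP[t tB h]|h]].
- rewrite in_setU1 => /orP[/eqP->|tB] h; [right|left; apply/EtP; exists t] => //.
- by exists t; rewrite // in_setU1 tB orbT.
- by exists new; rewrite // setU11.
Qed.

Lemma Et_mono x y : Et B x y -> Et (new |: B) x y.
Proof. by rewrite Et_step => ->. Qed.

Lemma Et_v y : Et (new |: B) v y -> y \in new.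
Proof.
rewrite Et_step => /orP[/EtP[t tB /andP[vt _]]|/andP[]//].
by move: (hv tB); rewrite vt.
Qed.

Lemma Et_old x y : x != v -> y != v -> Et (new |: B) x y -> Et B x y.
Proof.
move=> xv yv; rewrite Et_step => /orP[//|/andP[]].
rewrite !inE (negbTE xv) (negbTE yv) /= => xt yt.
case: (bd_sub htri) => t tB sub; apply/EtP; exists t => //.
by rewrite (subsetP sub _ xt) (subsetP sub _ yt).
Qed.

Lemma bd_step T : (T \in boundary (new |: B)) =
  ((T \in boundary B) && (T != tri)) || [&& #|T| == 3, v \in T & T \subset new].
Proof.
have eA : [set s in new |: B | T \subset s] =
   if T \subset new then new |: [set s in B | T \subset s] else [set s in B | T \subset s].
  apply/setP => s; case: ifP => h; rewrite !inE.
    by case: (s =P new) => [->|_] /=; rewrite ?eqxx ?h.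
  by case: (s =P new) => [->|_] /=; rewrite ?eqxx ?h ?(negbTE new_notin).
have Aempty : v \in T -> [set s in B | T \subset s] = set0.
  move=> vT; apply/setP => s; rewrite !inE; apply/negP => /andP[sB sub].
  by move: (hv sB); rewrite (subsetP sub _ vT).
rewrite [in LHS]inE eA.
case: (boolP (v \in T)) => vT.
- rewrite [T \in boundary B]inE Aempty // cards0 andbF /=.
  by case: ifP => h; rewrite ?cardsU1 ?inE ?cards0 /= ?andbF ?andbT.
- rewrite /= andbF orbF.
  case: ifP => h.
  + have Ttri : T \subset tri.
      apply/subsetP => u uT; move: (subsetP h u uT); rewrite /new in_setU1 => /orP[/eqP ue|//].
      by move: vT; rewrite -ue uT.
    rewrite cardsU1 inE (negbTE new_notin) /=.
    case: (boolP (#|T| == 3)) => [/eqP c3|c3]; last by rewrite inE (negbTE c3).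
    have eT : T = tri by apply/eqP; rewrite eqEcard Ttri (bd_card htri) c3.
    rewrite eT eqxx andbF.
    by move: htri; rewrite inE => /andP[_ /eqP ->].
  + case: (T =P tri) => [eT|_]; first by move: h; rewrite eT /new subsetUr.
    by rewrite [T \in boundary B]inE andbT.
Qed.

End Step.

Lemma ball_card4 B : stacked_ball B -> forall t, t \in B -> #|t| = 4.
Proof.
elim=> [t0 h t|B' tri v sB IH htri hv t]; first by rewrite inE => /eqP->.
by rewrite in_setU1 => /orP[/eqP->|/IH//]; apply: (card_new htri hv).
Qed.

End Ball.

Section Ball2.
Variable W : finType.
Implicit Types (B : {set {set W}}) (t s T tri : {set W}) (x y v : W).

Lemma is_edgeE (S : {set {set W}}) x y : is_edge S x y = Et S x y.
Proof. by []. Qed.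

Lemma sub3 (A : {set W}) x y w : #|A| = 4 -> w \in A -> w != x -> w != y ->
  x \in A -> y \in A ->
  [/\ #|A :\ w| = 3, A :\ w \subset A, x \in A :\ w & y \in A :\ w].
Proof.
move=> hA wA wx wy xA yA; split.
- by have := cardsD1 w A; rewrite wA; lia.
- exact: subD1set.
- by rewrite !inE eq_sym wx.
- by rewrite !inE eq_sym wy.
Qed.

Lemma bd_single t0 T : (T \in boundary [set t0]) = (#|T| == 3) && (T \subset t0).
Proof.
rewrite inE.
have -> : [set s in [set t0] | T \subset s] = if T \subset t0 then [set t0] else set0.
  by apply/setP => s; case: ifP => h; rewrite !inE; case: (s =P t0) => [->|]; rewrite ?h.
by case: ifP => h; rewrite ?cards1 ?cards0 ?andbT ?andbF.
Qed.

Lemma ball_edge B : stacked_ball B -> forall x y, is_edge (boundary B) x y = Et B x y.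
Proof.
elim=> [t0 h4|B0 tri v sB IH htri hv] x y.
- apply/EtP/EtP => [[T]|[t]].
    rewrite bd_single => /andP[_ sub] /andP[xT yT]; exists t0; rewrite ?inE //.
    by rewrite (subsetP sub _ xT) (subsetP sub _ yT).
  rewrite inE => /eqP -> /andP[xt yt].
  have [w [wt wx wy]] : exists w, [/\ w \in t0, w != x & w != y] by apply: pick_other; rewrite h4.
  have [c3 sub xT yT] := sub3 h4 wt wx wy xt yt.
  by exists (t0 :\ w); rewrite ?bd_single ?c3 ?sub ?xT ?yT.
- have newcase : x \in v |: tri -> y \in v |: tri -> is_edge (boundary ((v |: tri) |: B0)) x y.
    move=> xn yn.
    have [w [wt wx wy]] : exists w, [/\ w \in tri, w != x & w != y]
      by apply: pick_other; rewrite (bd_card htri).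
    have wn : w \in v |: tri by rewrite in_setU1 wt orbT.
    have [c3 sub xT yT] := sub3 (card_new htri hv) wn wx wy xn yn.
    apply/EtP; exists ((v |: tri) :\ w); last by rewrite xT yT.
    rewrite (bd_step htri hv); apply/orP; right; rewrite c3 sub eqxx andbT /= !inE eqxx andbT.
    by apply: contraNneq (vtri htri hv) => ->.
  apply/idP/idP.
  + case/EtP => T; rewrite (bd_step htri hv) => /orP[/andP[TB _] xyT|/and3P[_ _ sub] /andP[xT yT]].
      by apply: Et_mono; rewrite -IH; apply/EtP; exists T.
    by rewrite Et_step (subsetP sub _ xT) (subsetP sub _ yT) orbT.
  + rewrite Et_step => /orP[|/andP[xn yn]]; last exact: newcase.
    rewrite -IH => /EtP[T TB xyT].
    case: (T =P tri) => [eT|nT].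
      by case/andP: xyT; rewrite eT => xt yt; apply: newcase; rewrite in_setU1 ?xt ?yt orbT.
    by apply/EtP; exists T => //; rewrite (bd_step htri hv) TB /=; apply/orP; left; apply/eqP.
Qed.

End Ball2.

Lemma card3 (T : finType) (x y z : T) : x != y -> x != z -> y != z -> #|[set x; y; z]| = 3.
Proof. move=> xy xz yz. by rewrite setUC cardsU1 cards2 !inE xy negb_or (eq_sym z) xz (eq_sym z) yz. Qed.

Lemma other_elt (T : finType) (K : {set T}) u : 1 < #|K| -> exists2 w, w \in K & w != u.
Proof.
move=> h; have : 0 < #|K :\ u| by have := cardsD1 u K; lia.
by case/card_gt0P => w; rewrite !inE => /andP[? ?]; exists w.
Qed.

Lemma pig (T : finType) (D : {set T}) w1 w2 w3 : #|D| <= 2 -> w1 \in D -> w2 \in D -> w3 \in D ->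
  [\/ w1 = w2, w1 = w3 | w2 = w3].
Proof.
move=> hD h1 h2 h3; case: (w1 =P w2) => [|n12]; first by constructor 1.
have eD : [set w1; w2] = D.
  apply/eqP; rewrite eqEcard; apply/andP; split.
    by apply/subsetP => u; rewrite !inE => /orP[]/eqP->.
  by rewrite cards2; case: eqP.
by move: h3; rewrite -eD !inE => /orP[]/eqP->; [constructor 2|constructor 3].
Qed.

Lemma eqcs (T : finType) (A B : {set T}) : A \subset B -> #|B| <= #|A| -> A = B.
Proof. by move=> s c; apply/eqP; rewrite eqEcard s c. Qed.

Lemma cardD1_in (T : finType) (A : {set T}) w : w \in A -> #|A :\ w| = #|A| - 1.
Proof. by move=> wA; rewrite (cardsD1 w A) wA add1n subn1. Qed.

Lemma quad (T : finType) (A T1 T2 T3 : {set T}) x y : #|A| = 4 -> x != y ->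
  T1 \subset A -> T2 \subset A -> T3 \subset A ->
  #|T1| = 3 -> #|T2| = 3 -> #|T3| = 3 ->
  x \in T1 -> y \in T1 -> x \in T2 -> y \in T2 -> x \in T3 -> y \in T3 ->
  [\/ T1 = T2, T1 = T3 | T2 = T3].
Proof.
move=> hA xy s1 s2 s3 c1 c2 c3 x1 y1 x2 y2 x3 y3.
have key : forall Ti : {set T}, Ti \subset A -> #|Ti| = 3 -> x \in Ti -> y \in Ti ->
   exists2 w, w \in A :\ x :\ y & Ti = A :\ w.
  move=> Ti si ci xi yi.
  have : ~~ (A \subset Ti) by apply/negP => /subset_leq_card; rewrite ci hA.
  case/subsetPn => w wA wT; exists w.
    by rewrite !inE wA andbT; apply/andP; split; apply: contraNneq wT => ->.
  apply: eqcs; first by apply/subsetP => u uT; rewrite !inE (subsetP si _ uT) andbT;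
    apply: contraNneq wT => <-.
  by rewrite cardD1_in // hA ci.
have cD : #|A :\ x :\ y| <= 2.
  rewrite cardD1_in ?cardD1_in ?hA ?(subsetP s1 _ x1) //.
  by rewrite !inE eq_sym xy (subsetP s1 _ y1).
case: (key _ s1 c1 x1 y1) => w1 h1 ->; case: (key _ s2 c2 x2 y2) => w2 h2 ->;
case: (key _ s3 c3 x3 y3) => w3 h3 ->.
by case: (pig cD h1 h2 h3) => ->; [constructor 1|constructor 2|constructor 3].
Qed.

Section Ball3.
Variable W : finType.
Implicit Types (B : {set {set W}}) (t s T tri : {set W}) (x y v : W).

Lemma Et_sym B x y : Et B x y = Et B y x.
Proof. by apply/EtP/EtP => -[t ? h]; exists t; rewrite // andbC. Qed.

Lemma ball_clique B : stacked_ball B -> forall K : {set W}, 1 < #|K| ->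
  (forall u w, u \in K -> w \in K -> u != w -> Et B u w) -> exists2 t, t \in B & K \subset t.
Proof.
elim=> [t0 h4|B0 tri v sB IH htri hv] K hK hE.
- exists t0; rewrite ?inE //; apply/subsetP => u uK.
  case: (other_elt u hK) => w wK wu.
  have uw : u != w by rewrite eq_sym.
  by case/EtP: (hE _ _ uK wK uw) => t; rewrite inE => /eqP-> /andP[].
- case: (boolP (v \in K)) => vK.
    exists (v |: tri); first by rewrite setU11.
    apply/subsetP => u uK; case: (u =P v) => [->|/eqP uv]; first by rewrite setU11.
    by apply: (Et_v hv); apply: hE; rewrite // eq_sym.
  case: (IH K hK) => [u w uK wK uw|t tB sub]; last by exists t; rewrite // in_setU1 tB orbT.
  apply: (Et_old htri _ _ (hE _ _ uK wK uw)); apply: contraNneq vK => <- //.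
Qed.

Lemma ball_C4 B : stacked_ball B -> forall p q r z, Et B p q -> Et B q r -> Et B r z -> Et B z p ->
  p != r -> q != z -> Et B p r || Et B q z.
Proof.
elim=> [t0 h4|B0 tri v sB IH htri hv] p q r z hpq hqr hrs hsp pr qs.
- case/EtP: hpq => t; rewrite inE => /eqP-> /andP[pt _].
  case/EtP: hqr => t'; rewrite inE => /eqP-> /andP[_ rt].
  by apply/orP; left; apply/EtP; exists t0; rewrite ?inE ?pt ?rt.
- have nw : forall x y, x \in v |: tri -> y \in v |: tri -> Et ((v |: tri) |: B0) x y.
    by move=> x y xn yn; rewrite Et_step xn yn orbT.
  case: (p =P v) => [ep|/eqP pv].
    move: hpq hsp; rewrite ep => h1 h2; apply/orP; right.
    by apply: nw; apply: (Et_v hv); rewrite // Et_sym.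
  case: (q =P v) => [eq|/eqP qv].
    move: hpq hqr; rewrite eq => h1 h2; apply/orP; left.
    by apply: nw; apply: (Et_v hv); rewrite // Et_sym.
  case: (r =P v) => [er|/eqP rv].
    move: hqr hrs; rewrite er => h1 h2; apply/orP; right.
    by apply: nw; apply: (Et_v hv); rewrite // Et_sym.
  case: (z =P v) => [es|/eqP sv].
    move: hrs hsp; rewrite es => h1 h2; apply/orP; left.
    by apply: nw; apply: (Et_v hv); rewrite // Et_sym.
  have := IH p q r z (Et_old htri pv qv hpq) (Et_old htri qv rv hqr)
    (Et_old htri rv sv hrs) (Et_old htri sv pv hsp) pr qs.
  by case/orP => h; apply/orP; [left|right]; apply: Et_mono.
Qed.

End Ball3.

Section Ball4.
Variable W : finType.
Implicit Types (B : {set {set W}}) (t s T tri : {set W}) (x y v : W).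

Lemma ball_pm B : stacked_ball B -> forall x y T1 T2 T3, x != y ->
  T1 \in boundary B -> T2 \in boundary B -> T3 \in boundary B ->
  x \in T1 -> y \in T1 -> x \in T2 -> y \in T2 -> x \in T3 -> y \in T3 ->
  [\/ T1 = T2, T1 = T3 | T2 = T3].
Proof.
elim=> [t0 h4|B0 tri v sB IH htri hv] x y T1 T2 T3 xy.
- rewrite !bd_single => /andP[/eqP c1 s1] /andP[/eqP c2 s2] /andP[/eqP c3 s3].
  exact: quad h4 xy s1 s2 s3 c1 c2 c3.
- set new := v |: tri.
  have Hc : forall T, T \in boundary (new |: B0) ->
     (T \in boundary B0 /\ T != tri) \/ [/\ #|T| = 3, v \in T & T \subset new].
    move=> T; rewrite (bd_step htri hv) => /orP[/andP[? ?]|/and3P[/eqP ? ? ?]]; by [left|right].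
  have oldv : forall T, T \in boundary B0 -> v \notin T.
    by move=> T /bd_sub[t tB sub]; apply/negP => vT; move: (hv _ tB); rewrite (subsetP sub _ vT).
  move=> h1 h2 h3 x1 y1 x2 y2 x3 y3.
  case: (boolP ((x == v) || (y == v))) => hxy.
    have nn : forall T, T \in boundary (new |: B0) -> x \in T -> y \in T -> #|T| = 3 /\ T \subset new.
      move=> T hT xT yT; case: (Hc T hT) => [[o _]|[? ? ?]] //.
      by move: (oldv _ o); case/orP: hxy => /eqP <-; rewrite ?xT ?yT.
    case: (nn _ h1 x1 y1) => c1 s1; case: (nn _ h2 x2 y2) => c2 s2; case: (nn _ h3 x3 y3) => c3 s3.
    exact: quad (card_new htri hv) xy s1 s2 s3 c1 c2 c3 x1 y1 x2 y2 x3 y3.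
  move: hxy; rewrite negb_or => /andP[xv yv].
  have twonew : forall Ta Tb : {set W}, #|Ta| = 3 -> #|Tb| = 3 -> v \in Ta -> v \in Tb ->
      x \in Ta -> y \in Ta -> x \in Tb -> y \in Tb -> Ta = Tb.
    move=> Ta Tb ca cb va vb xa ya xb yb.
    have e3 : forall Tc : {set W}, #|Tc| = 3 -> v \in Tc -> x \in Tc -> y \in Tc -> [set x; y; v] = Tc.
      move=> Tc cc vc xc yc; apply: eqcs; last by rewrite cc card3.
      by apply/subsetP => u; rewrite !inE => /orP[/orP[]|]/eqP->.
    by rewrite -(e3 _ ca va xa ya) (e3 _ cb vb xb yb).
  have onenew : forall Tn Ta Tb : {set W}, v \in Tn -> Tn \subset new -> x \in Tn -> y \in Tn ->
      Ta \in boundary B0 -> Ta != tri -> Tb \in boundary B0 -> Tb != tri ->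
      x \in Ta -> y \in Ta -> x \in Tb -> y \in Tb -> Ta = Tb.
    move=> Tn Ta Tb _ sn xn yn oa na ob nb xa ya xb yb.
    have xt : x \in tri by move: (subsetP sn _ xn); rewrite /new in_setU1 (negbTE xv).
    have yt : y \in tri by move: (subsetP sn _ yn); rewrite /new in_setU1 (negbTE yv).
    case: (IH x y tri Ta Tb xy htri oa ob xt yt xa ya xb yb) => // e.
      by move: na; rewrite -e eqxx.
    by move: nb; rewrite -e eqxx.
  case: (Hc _ h1) => [[o1 n1]|[c1 v1 s1]]; case: (Hc _ h2) => [[o2 n2]|[c2 v2 s2]];
  case: (Hc _ h3) => [[o3 n3]|[c3 v3 s3]].
  - exact: IH x y T1 T2 T3 xy o1 o2 o3 x1 y1 x2 y2 x3 y3.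
  - by constructor 1; apply: (onenew T3).
  - by constructor 2; apply: (onenew T2).
  - by constructor 3; apply: twonew.
  - by constructor 3; apply: (onenew T1).
  - by constructor 2; apply: twonew.
  - by constructor 1; apply: twonew.
  - by constructor 1; apply: twonew.
Qed.

Lemma ball_three B : stacked_ball B -> forall t1 t2 t3 (K : {set W}), t1 \in B -> t2 \in B -> t3 \in B ->
  t1 != t2 -> t1 != t3 -> t2 != t3 -> #|K| = 3 ->
  K \subset t1 -> K \subset t2 -> K \subset t3 -> False.
Proof.
elim=> [t0 h4|B0 tri v sB IH htri hv] t1 t2 t3 K.
- by rewrite !inE => /eqP-> /eqP-> _; rewrite eqxx.
- set new := v |: tri.
  have one : forall s1 s2, s1 \in B0 -> s2 \in B0 -> #|K| = 3 -> K \subset new ->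
      K \subset s1 -> K \subset s2 -> s1 = s2.
    move=> s1 s2 b1 b2 cK sn k1 k2.
    have Kt : K \subset tri.
      apply/subsetP => u uK; move: (subsetP sn _ uK); rewrite /new in_setU1 => /orP[/eqP e|//].
      by move: (hv _ b1); rewrite -e (subsetP k1 _ uK).
    have eK : K = tri by apply: eqcs; rewrite // cK (bd_card htri).
    by apply: (bd_uniq htri); rewrite // -eK.
  rewrite !in_setU1 => /orP[/eqP e1|b1] /orP[/eqP e2|b2] /orP[/eqP e3|b3] n12 n13 n23 cK k1 k2 k3.
  + by move: n12; rewrite e1 e2 eqxx.
  + by move: n12; rewrite e1 e2 eqxx.
  + by move: n13; rewrite e1 e3 eqxx.
  + by move: n23 (one _ _ b2 b3 cK ltac:(by rewrite -e1) k2 k3) => /eqP.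
  + by move: n23; rewrite e2 e3 eqxx.
  + by move: n13 (one _ _ b1 b3 cK ltac:(by rewrite -e2) k1 k3) => /eqP.
  + by move: n12 (one _ _ b1 b2 cK ltac:(by rewrite -e3) k1 k2) => /eqP.
  + exact: IH t1 t2 t3 K b1 b2 b3 n12 n13 n23 cK k1 k2 k3.
Qed.

Lemma ball_acyclic B : stacked_ball B -> forall c : seq {set W},
  all (fun s => s \in B) c -> 2 < size c -> uniq c -> cycle (@dual_adj W) c -> False.
Proof.
elim=> [t0 h4|B0 tri v sB IH htri hv] c.
- move=> hall hs hu _; case: c hall hs hu => [|s1 [|s2 c]] //= /and3P[h1 h2 _] _ /andP[hn _].
  by move: hn h1 h2; rewrite !inE => hn /eqP e1 /eqP e2; rewrite e1 e2 eqxx in hn.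
- set new := v |: tri => hall hs hu hc.
  case: (boolP (new \in c)) => hn; last first.
    apply: (IH c) => //; apply/allP => s sc; move/allP: hall => /(_ s sc).
    by rewrite in_setU1 => /orP[/eqP e|//]; move: hn; rewrite -e sc.
  case: (rot_to hn) => i c' ec.
  have hu' : uniq (new :: c') by rewrite -ec rot_uniq.
  have hc' : cycle (@dual_adj W) (new :: c') by rewrite -ec rot_cycle.
  have hs' : 2 < size (new :: c') by rewrite -ec size_rot.
  have hall' : all (fun s => s \in new |: B0) (new :: c') by apply/allP => s; rewrite -ec mem_rot; apply: (allP hall).
  have nb : forall s, s \in new |: B0 -> s != new -> dual_adj new s -> tri \subset s.
    move=> s; rewrite in_setU1 => /orP[/eqP->|sB0 _]; first by rewrite eqxx.
    rewrite /dual_adj => /eqP c3.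
    have sub : new :&: s \subset tri.
      apply/subsetP => u; rewrite inE /new in_setU1 => /andP[/orP[/eqP->|//] vs].
      by move: (hv _ sB0); rewrite vs.
    have e : new :&: s = tri by apply: eqcs; rewrite // c3 (bd_card htri).
    by rewrite -e subsetIr.
  case: c' hu' hc' hs' hall' {ec} => [|y c''] //.
  case/lastP: c'' => [|c3 z] //= hu' hc' _ hall'.
  have ny : new != y by move: hu' => /andP[]; rewrite inE negb_or => /andP[].
  have nz : z != new by move: hu' => /andP[]; rewrite inE mem_rcons inE !negb_or => /and3P[_ ? _]; rewrite eq_sym.
  have yz : y != z by move: hu' => /and3P[_]; rewrite mem_rcons inE negb_or => /andP[].
  move: hc'; rewrite rcons_path /= => /andP[ay /andP[_]].
  rewrite last_rcons => az.
  move: hall' => /and3P[_ yB /allP hz].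
  have zB : z \in new |: B0 by apply: hz; rewrite mem_rcons inE eqxx.
  have ty : tri \subset y by apply: nb; rewrite // eq_sym.
  have tz : tri \subset z by apply: nb; rewrite // /dual_adj setIC.
  move: yB zB; rewrite !in_setU1 eq_sym (negbTE ny) (negbTE nz) /= => yB zB.
  by move/eqP: yz; apply; apply: (bd_uniq htri).
Qed.

End Ball4.

Section Transport.
Variables (V W : finType) (f : V -> W) (finj : injective f).
Variables (S : {set {set V}}) (B : {set {set W}}).
Hypothesis sB : stacked_ball B.
Hypothesis hbd : boundary B = [set f @: (tri : {set V}) | tri in S].

Let F (t : {set V}) := f @: t.

Lemma F_inj : injective F.
Proof. exact: imset_inj. Qed.

Lemma memF x (t : {set V}) : (f x \in F t) = (x \in t).
Proof. exact: mem_imset. Qed.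

Lemma subF (T t : {set V}) : (F T \subset F t) = (T \subset t).
Proof.
apply/idP/idP; last exact: imsetS.
move=> h; apply/subsetP => u uT; rewrite -memF; apply: (subsetP h); by rewrite memF.
Qed.

Lemma cardF (t : {set V}) : #|F t| = #|t|.
Proof. exact: card_imset. Qed.

Lemma bdF (T : {set V}) : (F T \in boundary B) = (T \in S).
Proof. rewrite hbd; exact: (mem_imset _ _ F_inj). Qed.

Lemma edgeF x y : is_edge S x y = Et B (f x) (f y).
Proof.
rewrite -ball_edge //; apply/EtP/EtP => [[T TS xy]|[T]].
  by exists (F T); rewrite ?bdF // !memF.
rewrite hbd => /imsetP[T0 T0S ->]; rewrite !memF => xy; by exists T0.
Qed.

Lemma tetF (t : {set V}) : (t \in sbar_tets S) = (F t \in B).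
Proof.
rewrite inE; apply/idP/idP.
- case/andP => /eqP c4 /forallP hall.
  have hcl : forall u w, u \in F t -> w \in F t -> u != w -> Et B u w.
    move=> u w /imsetP[u0 u0t ->] /imsetP[w0 w0t ->] uw.
    rewrite -edgeF; move: (hall u0); rewrite u0t => /forallP /(_ w0); rewrite w0t /= => /implyP; apply.
    by apply: contraNneq uw => ->.
  case: (ball_clique sB (K := F t)) => [|//|t' t'B sub]; first by rewrite cardF c4.
  suff -> : F t = t' by [].
  by apply: eqcs; rewrite // (ball_card4 sB t'B) cardF c4.
- move=> tB; rewrite -cardF (ball_card4 sB tB) eqxx /=.
  apply/forallP => u; apply/implyP => ut; apply/forallP => w; apply/implyP => wt; apply/implyP => uw.
  by rewrite edgeF; apply/EtP; exists (F t); rewrite // !memF ut wt.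
Qed.

End Transport.

Section Sphere.
Variables (V : finType) (S : {set {set V}}).
Hypothesis hS : stacked_sphere S.
Local Notation E := (is_edge S).
Local Notation C := (sbar_tets S).

Lemma sp_card T : T \in S -> #|T| = 3.
Proof.
case: hS => W [f [finj [B [sB hbd]]]].
by rewrite -(bdF finj hbd) => /bd_card; rewrite (cardF finj).
Qed.

Lemma sp_C4 p q r z : E p q -> E q r -> E r z -> E z p -> p != r -> q != z -> E p r || E q z.
Proof.
case: hS => W [f [finj [B [sB hbd]]]].
rewrite !(edgeF finj sB hbd) => h1 h2 h3 h4 pr qz.
by apply: (ball_C4 sB h1 h2 h3 h4); rewrite (inj_eq finj).
Qed.

Lemma sp_K5 (K : {set V}) : (forall u w, u \in K -> w \in K -> u != w -> E u w) -> 4 < #|K| -> False.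
Proof.
case: hS => W [f [finj [B [sB hbd]]]] hK cK.
case: (ball_clique sB (K := f @: K)).
- by rewrite (cardF finj); apply: leq_trans cK.
- move=> u w /imsetP[u0 u0K ->] /imsetP[w0 w0K ->] uw.
  by rewrite -(edgeF finj sB hbd); apply: hK => //; apply: contraNneq uw => ->.
- move=> t tB sub; have := subset_leq_card sub.
  by rewrite (cardF finj) (ball_card4 sB tB) leqNgt cK.
Qed.

Lemma sp_pm x y T1 T2 T3 : x != y -> T1 \in S -> T2 \in S -> T3 \in S ->
  x \in T1 -> y \in T1 -> x \in T2 -> y \in T2 -> x \in T3 -> y \in T3 ->
  [\/ T1 = T2, T1 = T3 | T2 = T3].
Proof.
case: hS => W [f [finj [B [sB hbd]]]].
rewrite -!(bdF finj hbd) -!(memF finj) => xy h1 h2 h3 x1 y1 x2 y2 x3 y3.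
have xy' : f x != f y by rewrite (inj_eq finj).
by case: (ball_pm sB xy' h1 h2 h3 x1 y1 x2 y2 x3 y3) => /(F_inj finj) ->;
  [constructor 1|constructor 2|constructor 3].
Qed.

Lemma sp_tri T t1 t2 : T \in S -> t1 \in C -> t2 \in C -> T \subset t1 -> T \subset t2 -> t1 = t2.
Proof.
case: hS => W [f [finj [B [sB hbd]]]].
rewrite -(bdF finj hbd) !(tetF finj sB hbd) -!(subF finj) => h b1 b2 s1 s2.
exact: (F_inj finj) (bd_uniq h b1 b2 s1 s2).
Qed.

Lemma sp_three t1 t2 t3 (K : {set V}) : t1 \in C -> t2 \in C -> t3 \in C ->
  t1 != t2 -> t1 != t3 -> t2 != t3 -> #|K| = 3 ->
  K \subset t1 -> K \subset t2 -> K \subset t3 -> False.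
Proof.
case: hS => W [f [finj [B [sB hbd]]]].
rewrite !(tetF finj sB hbd) -!(subF finj) -(cardF finj) -!(inj_eq (F_inj finj)).
move=> h1 h2 h3 n12 n13 n23 cK k1 k2 k3; exact: (ball_three sB h1 h2 h3 n12 n13 n23 cK k1 k2 k3).
Qed.

Lemma sp_acyclic (c : seq {set V}) : all (fun s => s \in C) c -> 2 < size c -> uniq c ->
  cycle (@dual_adj V) c -> False.
Proof.
case: hS => W [f [finj [B [sB hbd]]]] hall hs hu hc.
have h1 : all (fun s => s \in B) (map (fun t : {set V} => f @: t) c).
  by apply/allP => s /mapP[t tc ->]; rewrite -(tetF finj sB hbd); apply: (allP hall).
have h2 : 2 < size (map (fun t : {set V} => f @: t) c) by rewrite size_map.
have h3 : uniq (map (fun t : {set V} => f @: t) c) by rewrite (map_inj_uniq (F_inj finj)).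
have h4 : cycle (@dual_adj W) (map (fun t : {set V} => f @: t) c).
  rewrite cycle_map; apply: sub_cycle hc => s t /=.
  by rewrite /dual_adj -imsetI ?(cardF finj) //; move=> ? ? _ _; apply: finj.
exact: (ball_acyclic sB h1 h2 h3 h4).
Qed.

End Sphere.

Lemma conn_map (T : finType) (e e' : rel T) (h : T -> T) :
  (forall x y, e x y -> connect e' (h x) (h y)) ->
  forall x y, connect e x y -> connect e' (h x) (h y).
Proof.
move=> H x y /connectP[p pth ->]; elim: p x pth => [|z p IH] x /=; first by rewrite connect0.
case/andP=> exz pth; apply: connect_trans (H _ _ exz) (IH _ pth).
Qed.

Lemma conn_restrict (T : finType) (e e2 : rel T) (G : {set T}) :
  (forall u v, u \in G -> e u v -> v \in G) -> (forall u v, e u v -> e2 u v) ->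
  forall u v, u \in G -> connect e u v ->
  connect (fun s t => [&& s \in G, t \in G & e2 s t]) u v.
Proof.
move=> hG h2 u v uG /connectP[p pth ->]; elim: p u uG pth => [|z p IH] u uG /=; first by rewrite connect0.
case/andP=> euz pth; have zG := hG _ _ uG euz.
apply: connect_trans (IH _ zG pth); apply: connect1; by rewrite uG zG h2.
Qed.

Lemma card3_neq (T : finType) (x y z : T) : #|[set x; y; z]| = 3 -> [/\ x != y, x != z & y != z].
Proof.
move=> h; split; apply/negP => /eqP e.
- move: h; rewrite e setUid cards2; by case: (y != z).
- move: h; rewrite e setUAC setUid cards2; by case: (z != y).
- move: h; rewrite e -setUA setUid cards2; by case: (x != z).
Qed.

Lemma card4 (T : finType) (p q r s : T) : p != q -> p != r -> p != s -> q != r -> q != s -> r != s ->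
  #|[set p; q; r; s]| = 4.
Proof.
move=> pq pr ps qr qs rs.
rewrite setUC cardsU1 card3 // !inE !negb_or.
by rewrite (eq_sym s) ps (eq_sym s) qs (eq_sym s) rs.
Qed.

Lemma adj4 (T : finType) (t : {set T}) (p1 p2 p3 p4 : T) :
  p1 != p2 -> p1 != p3 -> p1 != p4 -> p2 != p3 -> p2 != p4 -> p3 != p4 ->
  #|t| = 4 -> t != [set p1; p2; p3; p4] ->
  dual_adj t [set p1; p2; p3; p4] =
  [|| [&& p2 \in t, p3 \in t & p4 \in t], [&& p1 \in t, p3 \in t & p4 \in t],
      [&& p1 \in t, p2 \in t & p4 \in t] | [&& p1 \in t, p2 \in t & p3 \in t]].
Proof.
move=> n12 n13 n14 n23 n24 n34.
set u := [set p1; p2; p3; p4] => ct ntu.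
have cu : #|u| = 4 by apply: card4.
have memu : forall z, (z \in u) = [|| z == p1, z == p2, z == p3 | z == p4].
  by move=> z; rewrite !inE !orbA.
apply/idP/idP.
- rewrite /dual_adj => /eqP c3.
  have cD : #|u :\: t| = 1.
    have := cardsID t u; rewrite setIC c3 cu; by move=> h; apply/eqP; rewrite -(eqn_add2l 3) h.
  move/eqP: cD => /cards1P[w hw].
  have wu : w \in u.
    have : w \in u :\: t by rewrite hw set11.
    by rewrite inE => /andP[].
  have other : forall z, z \in u -> z != w -> z \in t.
    move=> z zu zw; apply/negPn/negP => zt.
    have : z \in u :\: t by rewrite inE zt zu.
    by rewrite hw inE (negbTE zw).
  have n21 : p2 != p1 by rewrite eq_sym.
  have n31 : p3 != p1 by rewrite eq_sym.
  have n41 : p4 != p1 by rewrite eq_sym.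
  have n32 : p3 != p2 by rewrite eq_sym.
  have n42 : p4 != p2 by rewrite eq_sym.
  have n43 : p4 != p3 by rewrite eq_sym.
  have i1 : p1 \in u by rewrite memu eqxx.
  have i2 : p2 \in u by rewrite memu eqxx orbT.
  have i3 : p3 \in u by rewrite memu eqxx !orbT.
  have i4 : p4 \in u by rewrite memu eqxx !orbT.
  move: wu; rewrite memu => /or4P[] /eqP ew; subst w.
  + by rewrite (other p2) ?(other p3) ?(other p4).
  + by rewrite (other p1) ?(other p3) ?(other p4) ?orbT.
  + by rewrite (other p1) ?(other p2) ?(other p4) ?orbT.
  + by rewrite (other p1) ?(other p2) ?(other p3) ?orbT.
- move=> h; rewrite /dual_adj eqn_leq; apply/andP; split.
    rewrite leqNgt; apply/negP => h4.
    have : u \subset t.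
      have e : t :&: u = u by apply: eqcs; [exact: subsetIr| rewrite cu].
      by rewrite -e subsetIl.
    by move=> sub; move: ntu; rewrite eq_sym eqEcard sub ct cu.
  have key : forall a b c : T, a \in t -> b \in t -> c \in t -> a \in u -> b \in u -> c \in u ->
      a != b -> a != c -> b != c -> 3 <= #|t :&: u|.
    move=> a b c at_ bt ct' au bu cu' ab ac bc.
    rewrite -(card3 ab ac bc); apply: subset_leq_card; apply/subsetP => z.
    rewrite !in_setU !in_set1 in_setI => /orP[/orP[]|] /eqP->; by apply/andP.
  have i1 : p1 \in u by rewrite memu eqxx.
  have i2 : p2 \in u by rewrite memu eqxx orbT.
  have i3 : p3 \in u by rewrite memu eqxx !orbT.
  have i4 : p4 \in u by rewrite memu eqxx !orbT.
  case/or4P: h => /and3P[h1 h2 h3].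
  + exact: (key p2 p3 p4).
  + exact: (key p1 p3 p4).
  + exact: (key p1 p2 p4).
  + exact: (key p1 p2 p3).
Qed.

Lemma tet_card (V : finType) (S : {set {set V}}) t : t \in sbar_tets S -> #|t| = 4.
Proof. by rewrite inE => /andP[/eqP]. Qed.

Lemma tet_edge (V : finType) (S : {set {set V}}) t u w : t \in sbar_tets S -> u \in t -> w \in t ->
  u != w -> is_edge S u w.
Proof.
rewrite inE => /andP[_ /forallP h] ut wt uw.
by move: (h u); rewrite ut => /forallP /(_ w); rewrite wt uw.
Qed.

Lemma deg_le3 (V : finType) (S : {set {set V}}) (hS : stacked_sphere S) t T0 :
  t \in sbar_tets S -> T0 \in S -> T0 \subset t -> dual_deg (sbar_tets S) t <= 3.
Proof.
move=> tC T0S sub.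
have c3 := sp_card hS T0S.
have [w0 w0T] : exists w0, w0 \in T0 by apply/set0Pn; rewrite -card_gt0 c3.
set N := [set s in sbar_tets S | dual_adj t s].
pose g s := odflt w0 [pick u in t :\: s].
have hN : forall s, s \in N -> [/\ s \in sbar_tets S, s != t, #|t :&: s| = 3 & t :\: s = [set g s]].
  move=> s; rewrite inE => /andP[sC /eqP ad].
  have st : s != t by apply: contra_eqN ad => /eqP->; rewrite setIid (tet_card tC).
  have cD : #|t :\: s| == 1.
    by have := cardsID s t; rewrite ad (tet_card tC) => h; rewrite -(eqn_add2l 3) h.
  case/cards1P: cD => u0 hu; split => //; rewrite hu /g.
  case: pickP => [u|h]; first by rewrite hu inE => /eqP->.
  by move: (h u0); rewrite hu set11.
have gT : forall s, s \in N -> g s \in T0.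
  move=> s sN; case: (hN s sN) => sC st _ e.
  apply/negPn/negP => gn; move/negP: st; apply; apply/eqP.
  apply: (sp_tri hS T0S sC tC) => //; apply/subsetP => z zT.
  apply/negPn/negP => zs.
  have : z \in t :\: s by rewrite inE zs (subsetP sub _ zT).
  by rewrite e inE => /eqP ez; move: gn; rewrite -ez zT.
have ginj : {in N &, injective g}.
  move=> s1 s2 s1N s2N eg; case: (hN s1 s1N) => C1 n1 c1 e1; case: (hN s2 s2N) => C2 n2 c2 e2.
  have eI : t :&: s1 = t :&: s2.
    have h : forall s, t :\: (t :\: s) = t :&: s by move=> s; rewrite setDDr setDv set0U.
    by rewrite -!h e1 e2 eg.
  apply/eqP; apply/negPn/negP => n12.
  have nt1 : t != s1 by rewrite eq_sym.
  have nt2 : t != s2 by rewrite eq_sym.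
  apply: (sp_three hS tC C1 C2 nt1 nt2 n12 c1 (subsetIl _ _) (subsetIr _ _)).
  by rewrite eI subsetIr.
rewrite /dual_deg -/N -(card_in_imset ginj) -c3; apply: subset_leq_card.
by apply/subsetP => u /imsetP[s sN ->]; apply: gT.
Qed.

Section Main.
Variables (V : finType) (S : {set {set V}}) (a b c d : V) (al be sg : {set V}).
Hypotheses (hS : stacked_sphere S) (habc : [set a; b; c] \in S) (habd : [set a; b; d] \in S)
  (ncd : c != d) (necd : ~~ is_edge S c d)
  (alC : al \in sbar_tets S) (sal : [set a; b; c] \subset al)
  (beC : be \in sbar_tets S) (sbe : [set a; b; d] \subset be)
  (sgC : sg \in sbar_tets S) (deg4 : dual_deg (sbar_tets S) sg = 4)
  (hT : stacked_sphere (flip S a b c d)).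

Local Notation E := (is_edge S).
Local Notation T := (flip S a b c d).
Local Notation ET := (is_edge T).
Local Notation C := (sbar_tets S).
Local Notation CT := (sbar_tets T).

Lemma E_in (S0 : {set {set V}}) tri u w : tri \in S0 -> u \in tri -> w \in tri -> is_edge S0 u w.
Proof. by move=> h ut wt; apply/existsP; exists tri; rewrite h ut wt. Qed.

Lemma E_sym (S0 : {set {set V}}) u w : is_edge S0 u w = is_edge S0 w u.
Proof. exact: Et_sym. Qed.

Lemma dadj_sym (s t : {set V}) : dual_adj s t = dual_adj t s.
Proof. by rewrite /dual_adj setIC. Qed.

Lemma dist1 : [/\ a != b, a != c & b != c].
Proof. exact: card3_neq (sp_card hS habc). Qed.
Lemma dist2 : [/\ a != b, a != d & b != d].
Proof. exact: card3_neq (sp_card hS habd). Qed.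

Lemma inT tri : (tri \in T) =
  [|| tri == [set a; c; d], tri == [set b; c; d] | [&& tri != [set a; b; c], tri != [set a; b; d] & tri \in S]].
Proof. by rewrite /flip !inE -orbA andbA (andbC (tri != _)) -andbA. Qed.

Lemma acdT : [set a; c; d] \in T. Proof. by rewrite inT eqxx. Qed.
Lemma bcdT : [set b; c; d] \in T. Proof. by rewrite inT eqxx orbT. Qed.

Lemma ET1 u w : ET u w -> E u w || ((u \in [set c; d]) && (w \in [set c; d])).
Proof.
case/EtP => tri; rewrite inT => /or3P[/eqP->|/eqP->|/and3P[_ _ tS]] /andP[ut wt].
- move: ut wt; rewrite !inE -!orbA => /or3P[]/eqP-> /or3P[]/eqP->;
  rewrite ?eqxx ?orbT //; apply/orP; left;
  first [ by apply: (E_in habc); rewrite !inE eqxx ?orbT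
        | by apply: (E_in habd); rewrite !inE eqxx ?orbT ].
- move: ut wt; rewrite !inE -!orbA => /or3P[]/eqP-> /or3P[]/eqP->;
  rewrite ?eqxx ?orbT //; apply/orP; left;
  first [ by apply: (E_in habc); rewrite !inE eqxx ?orbT
        | by apply: (E_in habd); rewrite !inE eqxx ?orbT ].
- by rewrite (E_in tS ut wt).
Qed.

Lemma ET2 u w : E u w -> ~~ ((u == a) && (w == b)) -> ~~ ((u == b) && (w == a)) -> ET u w.
Proof.
case/EtP => tri tS /andP[ut wt] h1 h2.
case: (tri =P [set a; b; c]) => [e|n1].
  move: ut wt h1 h2; rewrite e !inE -!orbA => /or3P[]/eqP-> /or3P[]/eqP->; rewrite ?eqxx //= => _ _;
  first [ by apply: (E_in acdT); rewrite !inE eqxx ?orbT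
        | by apply: (E_in bcdT); rewrite !inE eqxx ?orbT ].
case: (tri =P [set a; b; d]) => [e|n2].
  move: ut wt h1 h2; rewrite e !inE -!orbA => /or3P[]/eqP-> /or3P[]/eqP->; rewrite ?eqxx //= => _ _;
  first [ by apply: (E_in acdT); rewrite !inE eqxx ?orbT
        | by apply: (E_in bcdT); rewrite !inE eqxx ?orbT ].
apply: (E_in (tri := tri)) => //; rewrite inT tS.
have n1' : tri != [set a; b; c] by apply/eqP.
have n2' : tri != [set a; b; d] by apply/eqP.
by rewrite n1' n2' !orbT.
Qed.

Lemma ET3 : ~~ ET a b.
Proof.
have [ab ac bc] := dist1; have [_ ad bd] := dist2.
apply/negP => /EtP[tri]; rewrite inT => /or3P[/eqP->|/eqP->|/and3P[n1 n2 tS]] /andP[at_ bt].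
- by move: bt; rewrite !inE (eq_sym b a) (negbTE ab) (negbTE bc) (negbTE bd).
- by move: at_; rewrite !inE (negbTE ab) (negbTE ac) (negbTE ad).
- have i1 : a \in [set a; b; c] by rewrite !inE eqxx.
  have i2 : b \in [set a; b; c] by rewrite !inE eqxx orbT.
  have i3 : a \in [set a; b; d] by rewrite !inE eqxx.
  have i4 : b \in [set a; b; d] by rewrite !inE eqxx orbT.
  case: (sp_pm hS ab habc habd tS i1 i2 i3 i4 at_ bt) => e.
  + have : d \in [set a; b; c] by rewrite e !inE eqxx orbT.
    by rewrite !inE (eq_sym d a) (negbTE ad) (eq_sym d b) (negbTE bd) (eq_sym d c) (negbTE ncd).
  + by move: n1; rewrite e eqxx.
  + by move: n2; rewrite e eqxx.
Qed.

Lemma ETv u w : ET u w -> ET u u.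
Proof. by case/EtP => tri tT /andP[ut _]; apply: (E_in tT). Qed.

Lemma exists_x : exists x, x \in al /\ x \notin [set a; b; c].
Proof.
have : ~~ (al \subset [set a; b; c]).
  by apply/negP => /subset_leq_card; rewrite (tet_card alC) (sp_card hS habc).
by case/subsetPn => x xa xn; exists x.
Qed.

Variable x : V.
Hypotheses (xal : x \in al) (xn : x \notin [set a; b; c]).

Lemma xdist : [/\ x != a, x != b, x != c & x != d].
Proof.
move: xn; rewrite !inE !negb_or => /andP[/andP[xa xb] xc]; split => //.
apply/negP => /eqP e; move/negP: necd; apply.
apply: (tet_edge alC) => //; last by rewrite -e.
by apply: (subsetP sal); rewrite !inE eqxx !orbT.
Qed.

Lemma eal : al = [set a; b; c; x].
Proof.
have [ab ac bc] := dist1; have [xa xb xc xd] := xdist.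
symmetry; apply: eqcs; last by rewrite (tet_card alC) card4 // eq_sym.
apply/subsetP => u; rewrite !inE -!orbA => /or4P[]/eqP->; rewrite ?xal //;
  by apply: (subsetP sal); rewrite !inE eqxx ?orbT.
Qed.

Lemma inal u : u \in [set a; b; c; x] -> u \in al.
Proof. by rewrite eal. Qed.

Lemma Eal u w : u \in [set a; b; c; x] -> w \in [set a; b; c; x] -> u != w -> E u w.
Proof. by move=> uin win; apply: (tet_edge alC); rewrite eal. Qed.

Lemma ET2u u w : E u w -> u \notin [set a; b] -> ET u w.
Proof.
move=> h; rewrite !inE negb_or => /andP[ua ub]; apply: ET2 => //.
  by rewrite (negbTE ua). by rewrite (negbTE ub).
Qed.

Lemma ET2w u w : E u w -> w \notin [set a; b] -> ET u w.
Proof.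
move=> h; rewrite !inE negb_or => /andP[wa wb]; apply: ET2 => //.
  by rewrite (negbTE wb) andbF. by rewrite (negbTE wa) andbF.
Qed.

Lemma ETac : ET a c. Proof. by apply: (E_in acdT); rewrite !inE eqxx ?orbT. Qed.
Lemma ETad : ET a d. Proof. by apply: (E_in acdT); rewrite !inE eqxx ?orbT. Qed.
Lemma ETcd : ET c d. Proof. by apply: (E_in acdT); rewrite !inE eqxx ?orbT. Qed.
Lemma ETbc : ET b c. Proof. by apply: (E_in bcdT); rewrite !inE eqxx ?orbT. Qed.
Lemma ETbd : ET b d. Proof. by apply: (E_in bcdT); rewrite !inE eqxx ?orbT. Qed.

Lemma notab u : u \notin [set a; b] = (u != a) && (u != b).
Proof. by rewrite !inE negb_or. Qed.

Lemma EdX : E d x.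
Proof.
have [ab ac bc] := dist1; have [_ ad bd] := dist2; have [xa xb xc xd] := xdist.
have h1 : ET b x by apply: ET2w; [apply: Eal; rewrite ?inE ?eqxx ?orbT // eq_sym | rewrite notab xa xb].
have h2 : ET x a by apply: ET2u; [apply: Eal; rewrite ?inE ?eqxx ?orbT // | rewrite notab xa xb].
have h3 : ET d b by rewrite E_sym ETbd.
have dx : d != x by rewrite eq_sym.
case/orP: (sp_C4 hT ETad h3 h1 h2 ab dx) => [|/ET1]; first by rewrite (negbTE ET3).
by case/orP => //; rewrite !inE (negbTE xc) (negbTE xd) andbF.
Qed.

Lemma N1 p : E p a -> E p b -> E p c -> E p d -> p \notin [set a; b; c; d] -> p = x.
Proof.
have [ab ac bc] := dist1; have [_ ad bd] := dist2; have [xa xb xc xd] := xdist.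
move=> pa pb pc pd; rewrite !inE !negb_or => /andP[/andP[/andP[npa npb] npc] npd].
case: (p =P x) => // /eqP px.
case: (boolP (E x p)) => exp.
  exfalso; apply: (sp_K5 hS (K := p |: [set a; b; c; x])); last first.
    rewrite cardsU1 card4 // ?(eq_sym c) ?(eq_sym b) ?(eq_sym a) //.
    by rewrite !inE !negb_or npa npb npc px.
  have Ep : forall w, w \in [set a; b; c; x] -> E p w.
    by move=> w; rewrite !inE -!orbA => /or4P[]/eqP->; rewrite // E_sym.
  move=> u w; rewrite !in_setU1 => /orP[/eqP->|uin] /orP[/eqP->|win] uw.
  - by rewrite eqxx in uw.
  - exact: Ep.
  - by rewrite E_sym; apply: Ep.
  - exact: Eal.
have xcE : E x c by apply: Eal; rewrite ?inE ?eqxx ?orbT.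
have xp : x != p by rewrite eq_sym.
have cp : E c p by rewrite E_sym.
have dxE : E d x := EdX.
case/orP: (sp_C4 hS xcE cp pd dxE xp ncd) => h.
  by rewrite h in exp.
by move: necd; rewrite h.
Qed.

Lemma N2 t p : t \in C -> a \in t -> b \in t -> p \in t -> p \notin [set a; b] ->
  p \in [set c; d; x].
Proof.
have [ab ac bc] := dist1; have [_ ad bd] := dist2; have [xa xb xc xd] := xdist.
move=> tC at_ bt pt pn.
case: (p =P c) => [->|/eqP pc]; first by rewrite !inE eqxx.
case: (p =P d) => [->|/eqP pd]; first by rewrite !inE eqxx orbT.
move: (pn); rewrite notab => /andP[pa pb].
have Epa : E p a by apply: (tet_edge tC).
have Epb : E p b by apply: (tet_edge tC).
have hbp : ET b p by apply: ET2w => //; rewrite E_sym.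
have hpa : ET p a by apply: ET2u.
have cp : c != p by rewrite eq_sym.
have dp : d != p by rewrite eq_sym.
have ETcb : ET c b by rewrite E_sym ETbc.
have ETdb : ET d b by rewrite E_sym ETbd.
have Ecp : E c p.
  case/orP: (sp_C4 hT ETac ETcb hbp hpa ab cp) => [|/ET1]; first by rewrite (negbTE ET3).
  by case/orP => //; rewrite !inE (negbTE pc) (negbTE pd) andbF.
have Edp : E d p.
  case/orP: (sp_C4 hT ETad ETdb hbp hpa ab dp) => [|/ET1]; first by rewrite (negbTE ET3).
  by case/orP => //; rewrite !inE (negbTE pc) (negbTE pd) andbF.
have -> : p = x.
  have Epc : E p c by rewrite E_sym.
  have Epd : E p d by rewrite E_sym.
  by apply: N1 => //; rewrite !inE !negb_or pa pb pc pd.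
by rewrite !inE eqxx !orbT.
Qed.

Lemma AB t : t \in C -> a \in t -> b \in t -> t = al \/ t = be.
Proof.
have [ab ac bc] := dist1; have [_ ad bd] := dist2; have [xa xb xc xd] := xdist.
move=> tC at_ bt.
case: (boolP (c \in t)) => ct.
  left; apply: (sp_tri hS habc tC alC) => //.
  by apply/subsetP => u; rewrite !inE -!orbA => /or3P[]/eqP->.
case: (boolP (d \in t)) => dt.
  right; apply: (sp_tri hS habd tC beC) => //.
  by apply/subsetP => u; rewrite !inE -!orbA => /or3P[]/eqP->.
exfalso.
have : t \subset [set a; b; x].
  apply/subsetP => u ut.
  case: (boolP (u \in [set a; b])) => [|un]; first by rewrite !inE => ->.
  move: (N2 tC at_ bt ut un); rewrite !inE -!orbA => /or3P[]/eqP e.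
  - by move: ct; rewrite -e ut.
  - by move: dt; rewrite -e ut.
  - by rewrite e eqxx !orbT.
move/subset_leq_card; rewrite (tet_card tC) card3 //; by rewrite eq_sym.
Qed.

Lemma xbe : x \in be.
Proof.
have [ab ac bc] := dist1; have [_ ad bd] := dist2; have [xa xb xc xd] := xdist.
have : ~~ (be \subset [set a; b; d]).
  by apply/negP => /subset_leq_card; rewrite (tet_card beC) (sp_card hS habd).
case/subsetPn => y ybe yn.
have yab : y \notin [set a; b] by move: yn; rewrite !inE !negb_or => /andP[/andP[-> ->]].
have abe : a \in be by apply: (subsetP sbe); rewrite !inE eqxx.
have bbe : b \in be by apply: (subsetP sbe); rewrite !inE eqxx orbT.
have dbe : d \in be by apply: (subsetP sbe); rewrite !inE eqxx orbT.
move: (N2 beC abe bbe ybe yab); rewrite !inE -!orbA => /or3P[]/eqP e.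
- by move: necd; rewrite (tet_edge beC) // -e.
- by move: yn; rewrite e !inE eqxx orbT.
- by rewrite -e.
Qed.

Lemma ebe : be = [set a; b; d; x].
Proof.
have [ab ac bc] := dist1; have [_ ad bd] := dist2; have [xa xb xc xd] := xdist.
symmetry; apply: eqcs; last by rewrite (tet_card beC) card4 // eq_sym.
apply/subsetP => u; rewrite !inE -!orbA => /or4P[]/eqP->; rewrite ?xbe //;
  by apply: (subsetP sbe); rewrite !inE eqxx ?orbT.
Qed.

Local Notation gm := [set a; c; d; x].
Local Notation dl := [set b; c; d; x].

Lemma gm_notC : gm \notin C.
Proof.
apply/negP => h; move/negP: necd; apply; apply: (tet_edge h) => //; rewrite ?inE ?eqxx ?orbT //.
Qed.

Lemma dl_notC : dl \notin C.
Proof.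
apply/negP => h; move/negP: necd; apply; apply: (tet_edge h) => //; rewrite ?inE ?eqxx ?orbT //.
Qed.

Lemma ETfacts : [/\ ET a x, ET c x, ET d x & ET b x].
Proof.
have [ab ac bc] := dist1; have [_ ad bd] := dist2; have [xa xb xc xd] := xdist.
split.
- by apply: ET2w; [apply: Eal; rewrite ?inE ?eqxx ?orbT // eq_sym | rewrite notab xa xb].
- by apply: ET2u; [apply: Eal; rewrite ?inE ?eqxx ?orbT // eq_sym | rewrite notab (eq_sym c) ac (eq_sym c) bc].
- by apply: ET2u; [exact: EdX | rewrite notab (eq_sym d) ad (eq_sym d) bd].
- by apply: ET2w; [apply: Eal; rewrite ?inE ?eqxx ?orbT // eq_sym | rewrite notab xa xb].
Qed.

Lemma gmCT : gm \in CT.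
Proof.
have [ab ac bc] := dist1; have [_ ad bd] := dist2; have [xa xb xc xd] := xdist.
have [h1 h2 h3 h4] := ETfacts.
have h5 := ETac; have h6 := ETad; have h7 := ETcd.
have ax : a != x by rewrite eq_sym.
have bx : b != x by rewrite eq_sym.
have cx : c != x by rewrite eq_sym.
have dx : d != x by rewrite eq_sym.
rewrite inE card4 //=.
apply/forallP => u; apply/implyP; rewrite !inE -!orbA => /or4P[]/eqP->;
apply/forallP => w; apply/implyP; rewrite !inE -!orbA => /or4P[]/eqP->;
rewrite ?eqxx //=; apply/implyP => _; first [done | by rewrite E_sym].
Qed.

Lemma dlCT : dl \in CT.
Proof.
have [ab ac bc] := dist1; have [_ ad bd] := dist2; have [xa xb xc xd] := xdist.
have [h1 h2 h3 h4] := ETfacts.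
have h5 := ETbc; have h6 := ETbd; have h7 := ETcd.
have ax : a != x by rewrite eq_sym.
have bx : b != x by rewrite eq_sym.
have cx : c != x by rewrite eq_sym.
have dx : d != x by rewrite eq_sym.
rewrite inE card4 //=.
apply/forallP => u; apply/implyP; rewrite !inE -!orbA => /or4P[]/eqP->;
apply/forallP => w; apply/implyP; rewrite !inE -!orbA => /or4P[]/eqP->;
rewrite ?eqxx //=; apply/implyP => _; first [done | by rewrite E_sym].
Qed.

Lemma CT1 t : (t \in CT) = [&& t \in C, t != al & t != be] || (t == gm) || (t == dl).
Proof.
have [ab ac bc] := dist1; have [_ ad bd] := dist2; have [xa xb xc xd] := xdist.
apply/idP/idP.
- move=> tCT.
  case: (boolP ((c \in t) && (d \in t))) => [/andP[ct dt]|ncdt].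
    have Hp : forall u, u \in t -> u \notin [set a; b; c; d] -> u = x.
      move=> u ut; rewrite !inE !negb_or => /andP[/andP[/andP[ua ub] uc] ud].
      have Euc : E u c.
        by case/orP: (ET1 (tet_edge tCT ut ct uc)) => //; rewrite !inE (negbTE uc) (negbTE ud).
      have Eud : E u d.
        by case/orP: (ET1 (tet_edge tCT ut dt ud)) => //; rewrite !inE (negbTE uc) (negbTE ud).
      have Eac : E a c by apply: (E_in habc); rewrite !inE eqxx ?orbT.
      have Ebc : E b c by apply: (E_in habc); rewrite !inE eqxx ?orbT.
      have Eda : E d a by apply: (E_in habd); rewrite !inE eqxx ?orbT.
      have Edb : E d b by apply: (E_in habd); rewrite !inE eqxx ?orbT.
      have Ecu : E c u by rewrite E_sym.
      have au : a != u by rewrite eq_sym.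
      have bu : b != u by rewrite eq_sym.
      have Eua : E u a.
        by case/orP: (sp_C4 hS Eac Ecu Eud Eda au ncd) => [h|h]; [rewrite E_sym | move: necd; rewrite h].
      have Eub : E u b.
        by case/orP: (sp_C4 hS Ebc Ecu Eud Edb bu ncd) => [h|h]; [rewrite E_sym | move: necd; rewrite h].
      by apply: N1 => //; rewrite !inE !negb_or ua ub uc ud.
    have nab : ~~ ((a \in t) && (b \in t)).
      apply/negP => /andP[at_ bt]; move/negP: ET3; apply; exact: (tet_edge tCT).
    have ct4 := tet_card tCT.
    case: (boolP (a \in t)) => at_.
      have nbt : b \notin t by move: nab; rewrite at_.
      apply/orP; left; apply/orP; right; apply/eqP; apply: eqcs; last by rewrite ct4 card4 // eq_sym.
      apply/subsetP => u ut; case: (boolP (u \in [set a; b; c; d])) => [|un]; last by rewrite (Hp u ut un) !inE eqxx !orbT.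
      rewrite !inE -!orbA => /or4P[]/eqP e; rewrite e ?eqxx ?orbT //.
      by move: nbt; rewrite -e ut.
    apply/orP; right; apply/eqP; apply: eqcs; last by rewrite ct4 card4 // eq_sym.
    apply/subsetP => u ut; case: (boolP (u \in [set a; b; c; d])) => [|un]; last by rewrite (Hp u ut un) !inE eqxx !orbT.
    rewrite !inE -!orbA => /or4P[]/eqP e; rewrite e ?eqxx ?orbT //.
    by move: at_; rewrite -e ut.
  have tC : t \in C.
    rewrite inE (tet_card tCT) eqxx /=.
    apply/forallP => u; apply/implyP => ut; apply/forallP => w; apply/implyP => wt; apply/implyP => uw.
    have := ET1 (tet_edge tCT ut wt uw); case/orP => // /andP[hu hw].
    move: hu hw; rewrite !inE => /orP[]/eqP eu /orP[]/eqP ew.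
    + by move: uw; rewrite eu ew eqxx.
    + by move: ncdt; rewrite -eu -ew ut wt.
    + by move: ncdt; rewrite -eu -ew ut wt.
    + by move: uw; rewrite eu ew eqxx.
  have nab : ~~ ((a \in t) && (b \in t)).
    apply/negP => /andP[at_ bt]; move/negP: ET3; apply; exact: (tet_edge tCT).
  rewrite tC /=; apply/orP; left; apply/orP; left; apply/andP; split; apply/negP => /eqP e; move/negP: nab; apply.
    by rewrite e !inal ?inE ?eqxx ?orbT.
  by rewrite e ebe !inE !eqxx ?orbT.
- case/orP => [/orP[/and3P[tC nal nbe]|/eqP->]|/eqP->]; last exact: dlCT; last exact: gmCT.
  rewrite inE (tet_card tC) eqxx /=.
  apply/forallP => u; apply/implyP => ut; apply/forallP => w; apply/implyP => wt; apply/implyP => uw.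
  apply: ET2; first exact: (tet_edge tC ut wt uw).
    apply/negP => /andP[/eqP eu /eqP ew]; rewrite eu ew in ut wt.
    by case: (AB tC ut wt) => e; [move: nal|move: nbe]; rewrite e eqxx.
  apply/negP => /andP[/eqP eu /eqP ew]; rewrite eu ew in ut wt.
  by case: (AB tC wt ut) => e; [move: nal|move: nbe]; rewrite e eqxx.
Qed.

Lemma ADJ t : t \in C -> t != al -> t != be ->
  (dual_adj t al || dual_adj t be) = (dual_adj t gm || dual_adj t dl) /\
  (dual_adj t al : nat) + dual_adj t be = (dual_adj t gm : nat) + dual_adj t dl.
Proof.
have [ab ac bc] := dist1; have [_ ad bd] := dist2; have [xa xb xc xd] := xdist.
have ax : a != x by rewrite eq_sym.
have bx : b != x by rewrite eq_sym.
have cx : c != x by rewrite eq_sym.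
have dx : d != x by rewrite eq_sym.
move=> tC nal nbe.
have nab : ~~ ((a \in t) && (b \in t)).
  by apply/negP => /andP[at_ bt]; case: (AB tC at_ bt) => e; [move: nal|move: nbe]; rewrite e eqxx.
have ncdt : ~~ ((c \in t) && (d \in t)).
  by apply/negP => /andP[ct dt]; move/negP: necd; apply; apply: (tet_edge tC).
have ngm : t != gm by apply: contraNneq gm_notC => <-.
have ndl : t != dl by apply: contraNneq dl_notC => <-.
have t4 := tet_card tC.
move: nal nbe; rewrite eal ebe => nal nbe.
rewrite !adj4 //.
move: nab ncdt; case: (a \in t); case: (b \in t); case: (c \in t); case: (d \in t); case: (x \in t); by [].
Qed.

Lemma sg_ne : sg != al /\ sg != be.
Proof.
split; apply/negP => /eqP e.
  by have := deg_le3 hS alC habc sal; rewrite -e deg4.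
by have := deg_le3 hS beC habd sbe; rewrite -e deg4.
Qed.

Lemma sgCT : sg \in CT.
Proof. by case: sg_ne => n1 n2; rewrite CT1 sgC n1 n2. Qed.

Lemma al_ne_be : al != be.
Proof.
have [ab ac bc] := dist1; have [xa xb xc xd] := xdist.
apply/negP => /eqP e.
have : c \in be by rewrite -e eal !inE eqxx !orbT.
by rewrite ebe !inE (eq_sym c a) (negbTE ac) (eq_sym c b) (negbTE bc) (negbTE ncd) (eq_sym c x) (negbTE xc).
Qed.

Lemma gm_ne_dl : gm != dl.
Proof.
have [ab ac bc] := dist1; have [_ ad bd] := dist2; have [xa xb xc xd] := xdist.
apply/negP => /eqP e.
have : a \in dl by rewrite -e !inE eqxx.
by rewrite !inE (negbTE ab) (negbTE ac) (negbTE ad) (eq_sym a x) (negbTE xa).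
Qed.

Lemma deg_sg : dual_deg CT sg = 4.
Proof.
rewrite /dual_deg; set NC := [set t in C | dual_adj sg t]; set NT := [set t in CT | dual_adj sg t].
have e1 : #|NC| = dual_adj sg al + (dual_adj sg be + #|NC :\ al :\ be|).
  rewrite (cardsD1 al NC) (cardsD1 be (NC :\ al)) in_setD1 /NC in_set alC in_set beC /=.
  by rewrite eq_sym al_ne_be.
have e2 : #|NT| = dual_adj sg gm + (dual_adj sg dl + #|NT :\ gm :\ dl|).
  rewrite (cardsD1 gm NT) (cardsD1 dl (NT :\ gm)) in_setD1 /NT in_set gmCT in_set dlCT /=.
  by rewrite eq_sym gm_ne_dl.
have e3 : NC :\ al :\ be = NT :\ gm :\ dl.
  have mNC : forall t, (t \in NC) = (t \in C) && dual_adj sg t by move=> t; rewrite /NC in_set.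
  have mNT : forall t, (t \in NT) = (t \in CT) && dual_adj sg t by move=> t; rewrite /NT in_set.
  apply/setP => t; rewrite !in_setD1 mNC mNT CT1.
  case: (boolP (t == gm)) => [/eqP->|ngm]; first by rewrite (negbTE gm_notC) !andbF.
  case: (boolP (t == dl)) => [/eqP->|ndl]; first by rewrite (negbTE dl_notC) !andbF.
  rewrite !orbF /=.
  by case: (t \in C); case: (t != al); case: (t != be); case: (dual_adj sg t).
case: sg_ne => n1 n2; case: (ADJ sgC n1 n2) => _ hsum.
move: deg4; rewrite /dual_deg -/NC e1 e2 e3 !addnA hsum.
by move=> ->.
Qed.

Lemma Rsym (C0 : {set {set V}}) : symmetric (dual_adj_minus C0 sg).
Proof.
move=> s t; rewrite /dual_adj_minus dadj_sym.
by case: (s \in C0); case: (t \in C0); case: (s != sg); case: (t != sg).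
Qed.

Lemma conn_sym (C0 : {set {set V}}) s t :
  connect (dual_adj_minus C0 sg) s t = connect (dual_adj_minus C0 sg) t s.
Proof. exact: (sym_connect_sym (Rsym C0)). Qed.

Lemma comp_eq (C0 : {set {set V}}) s t : connect (dual_adj_minus C0 sg) s t ->
  [set u in C0 :\ sg | connect (dual_adj_minus C0 sg) s u] =
  [set u in C0 :\ sg | connect (dual_adj_minus C0 sg) t u].
Proof.
move=> h; apply/setP => u; rewrite !in_set.
by rewrite (same_connect (sym_connect_sym (Rsym C0)) h).
Qed.

Lemma sg_ne2 : sg != gm /\ sg != dl.
Proof. by split; apply/negP => /eqP e; [move: gm_notC | move: dl_notC]; rewrite -e sgC. Qed.

Local Notation R := (dual_adj_minus C sg).
Local Notation R' := (dual_adj_minus CT sg).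

Lemma alR : R al be.
Proof.
have [ab ac bc] := dist1; have [_ ad bd] := dist2; have [xa xb xc xd] := xdist.
have ax : a != x by rewrite eq_sym.
have bx : b != x by rewrite eq_sym.
have dx : d != x by rewrite eq_sym.
case: sg_ne => n1 n2.
rewrite /dual_adj_minus alC beC (eq_sym al) n1 (eq_sym be) n2 /=.
have ne : al != [set a; b; d; x] by rewrite -ebe al_ne_be.
rewrite ebe adj4 ?(tet_card alC) //.
have aal : a \in al by rewrite eal !inE eqxx.
have bal : b \in al by rewrite eal !inE eqxx orbT.
by rewrite aal bal xal !orbT.
Qed.

Lemma gmR : R' gm dl.
Proof.
have [ab ac bc] := dist1; have [_ ad bd] := dist2; have [xa xb xc xd] := xdist.
have bx : b != x by rewrite eq_sym.
have cx : c != x by rewrite eq_sym.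
have dx : d != x by rewrite eq_sym.
case: sg_ne2 => n1 n2.
rewrite /dual_adj_minus gmCT dlCT (eq_sym gm) n1 (eq_sym dl) n2 /=.
rewrite adj4 ?card4 ?gm_ne_dl // ?(eq_sym a x) //.
by rewrite !inE !eqxx !orbT.
Qed.

Lemma toX t : t \in C -> t != sg -> t != al -> t != be -> (dual_adj t al || dual_adj t be) ->
  connect R' gm t.
Proof.
move=> tC ts ta tb h; case: (ADJ tC ta tb) => e _; move: h; rewrite e.
have tCT : t \in CT by rewrite CT1 tC ta tb.
case: sg_ne2 => n1 n2.
case/orP => h.
  by apply: connect1; rewrite /dual_adj_minus gmCT tCT (eq_sym gm) n1 ts dadj_sym h.
apply: connect_trans (connect1 gmR) (connect1 _).
by rewrite /dual_adj_minus dlCT tCT (eq_sym dl) n2 ts dadj_sym h.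
Qed.

Lemma fromY t : t \in CT -> t != sg -> t != gm -> t != dl -> (dual_adj t gm || dual_adj t dl) ->
  connect R al t.
Proof.
move=> tCT ts tg td h.
have : [&& t \in C, t != al & t != be] by move: tCT; rewrite CT1 (negbTE tg) (negbTE td) !orbF.
case/and3P => tC ta tb.
case: (ADJ tC ta tb) => e _; move: h; rewrite -e.
case: sg_ne => n1 n2.
case/orP => h.
  by apply: connect1; rewrite /dual_adj_minus alC tC (eq_sym al) n1 ts dadj_sym h.
apply: connect_trans (connect1 alR) (connect1 _).
by rewrite /dual_adj_minus beC tC (eq_sym be) n2 ts dadj_sym h.
Qed.

Definition phi (s : {set V}) := if (s == al) || (s == be) then gm else s.
Definition psi (s : {set V}) := if (s == gm) || (s == dl) then al else s.

Lemma Rmap s t : R s t -> connect R' (phi s) (phi t).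
Proof.
move=> h; move: (h); rewrite /dual_adj_minus => /and5P[sC tC ss ts st].
have H : forall u v, u \in C -> v \in C -> v != sg -> (u == al) || (u == be) -> ~~ ((v == al) || (v == be)) ->
    dual_adj u v -> connect R' gm v.
  move=> u v uC vC vs hu hv uv; move: hv; rewrite negb_or => /andP[va vb].
  have uv' : dual_adj v u by rewrite dadj_sym.
  apply: toX => //; case/orP: hu => /eqP eu; rewrite -eu uv' ?orbT //.
rewrite /phi; case: ifP => hs; case: ifP => ht.
- exact: connect0.
- by apply: (H s t sC tC ts hs) => //; rewrite ht.
- by rewrite conn_sym; apply: (H t s tC sC ss ht) => //; [rewrite hs | rewrite dadj_sym].
- apply: connect1; move: hs ht => /negbT/norP[sa sb] /negbT/norP[ta tb].
  by rewrite /dual_adj_minus !CT1 sC tC sa sb ta tb ss ts st.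
Qed.

Lemma Rmap' s t : R' s t -> connect R (psi s) (psi t).
Proof.
move=> h; move: (h); rewrite /dual_adj_minus => /and5P[sC tC ss ts st].
have H : forall u v, u \in CT -> v \in CT -> v != sg -> (u == gm) || (u == dl) -> ~~ ((v == gm) || (v == dl)) ->
    dual_adj u v -> connect R al v.
  move=> u v uC vC vs hu hv uv; move: hv; rewrite negb_or => /andP[vg vd].
  have uv' : dual_adj v u by rewrite dadj_sym.
  apply: fromY => //; case/orP: hu => /eqP eu; rewrite -eu uv' ?orbT //.
rewrite /psi; case: ifP => hs; case: ifP => ht.
- exact: connect0.
- by apply: (H s t sC tC ts hs) => //; rewrite ht.
- by rewrite conn_sym; apply: (H t s tC sC ss ht) => //; [rewrite hs | rewrite dadj_sym].
- apply: connect1; move: hs ht => /negbT/norP[sg' sd] /negbT/norP[tg td].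
  move: sC tC; rewrite !CT1 (negbTE sg') (negbTE sd) (negbTE tg) (negbTE td) !orbF.
  case/and3P => sC _ _ /and3P[tC _ _].
  by rewrite /dual_adj_minus sC tC ss ts st.
Qed.

Local Notation comp C0 s := [set u in C0 :\ sg | connect (dual_adj_minus C0 sg) s u].

Lemma mcomp (C0 : {set {set V}}) s u :
  (u \in comp C0 s) = [&& u != sg, u \in C0 & connect (dual_adj_minus C0 sg) s u].
Proof. by rewrite in_set in_setD1 andbA. Qed.

Lemma notX s : s \in C -> ~~ connect R al s -> (s != al) && (s != be).
Proof.
move=> sC nc; apply/andP; split; apply/negP => /eqP e; move/negP: nc; apply; rewrite e.
  exact: connect0.
exact: connect1 alR.
Qed.

Lemma claimA s : s \in C -> s != sg -> ~~ connect R al s -> comp CT s = comp C s.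
Proof.
move=> sC ss nc; have /andP[sa sb] := notX sC nc.
have sY : (s == gm) || (s == dl) = false.
  apply/negbTE/norP; split; apply/negP => /eqP e; move: sC; rewrite e.
    by rewrite (negbTE gm_notC).
  by rewrite (negbTE dl_notC).
have RM : forall s0 t0, connect R s0 t0 -> connect R' (phi s0) (phi t0).
  by apply: conn_map => ? ? h; apply: Rmap.
have RM' : forall s0 t0, connect R' s0 t0 -> connect R (psi s0) (psi t0).
  by apply: conn_map => ? ? h; apply: Rmap'.
apply/setP => t; rewrite !mcomp; apply/and3P/and3P => -[ts tCT ct].
- case: (boolP ((t == gm) || (t == dl))) => tY.
    have cs : connect R s al by have := RM' _ _ ct; rewrite /psi sY tY.
    by move: nc; rewrite conn_sym cs.
  move: (tCT); rewrite CT1; move: tY => /norP[tg td]; rewrite (negbTE tg) (negbTE td) !orbF.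
  case/and3P => tC _ _; split => //.
  by have := RM' _ _ ct; rewrite /psi sY (negbTE tg) (negbTE td).
- have tX : (t == al) || (t == be) = false.
    apply/negbTE/norP; split; apply/negP => /eqP e.
      by move: nc; rewrite conn_sym -e ct.
    have : connect R al s by apply: connect_trans (connect1 alR) _; rewrite conn_sym -e.
    by rewrite (negbTE nc).
  move: tX => /negbT/norP[ta tb]; split => //.
  by rewrite CT1 tCT ta tb.
  by have := RM _ _ ct; rewrite /phi (negbTE sa) (negbTE sb) (negbTE ta) (negbTE tb).
Qed.

Lemma connRM s0 t0 : connect R s0 t0 -> connect R' (phi s0) (phi t0).
Proof. by apply: conn_map => ? ? h; apply: Rmap. Qed.

Lemma main_comp : exists2 G4, G4 \in comps_minus C sg &
  [/\ al \in G4, be \in G4 &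
    (exists G4', [/\ dual_tree G4', G4' \notin comps_minus C sg :\ G4 &
       comps_minus CT sg = G4' |: (comps_minus C sg :\ G4)])].
Proof.
have [n1 n2] := sg_ne; have [m1 m2] := sg_ne2.
have alIn : al \in C :\ sg by rewrite in_setD1 eq_sym n1 alC.
have gmIn : gm \in CT :\ sg by rewrite in_setD1 eq_sym m1 gmCT.
exists (comp C al); first by apply/imsetP; exists al.
split.
- by rewrite mcomp eq_sym n1 alC connect0.
- by rewrite mcomp eq_sym n2 beC (connect1 alR).
exists (comp CT gm); split.
- set G := comp CT gm.
  have gmG : gm \in G by rewrite mcomp eq_sym m1 gmCT connect0.
  split; [|split].
  + by apply/set0Pn; exists gm.
  + move=> u w uG wG.
    have clos : forall u0 v0, u0 \in G -> R' u0 v0 -> v0 \in G.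
      move=> u0 v0; rewrite !mcomp => /and3P[_ _ cu] h; move: (h); rewrite /dual_adj_minus => /and5P[_ vC _ vs _].
      by rewrite vs vC (connect_trans cu (connect1 h)).
    have sub : forall u0 v0, R' u0 v0 -> dual_adj u0 v0 by move=> ? ? /and5P[].
    have cg : forall v, v \in G -> connect (fun s t => [&& s \in G, t \in G & dual_adj s t]) gm v.
      move=> v vG; move: (vG); rewrite mcomp => /and3P[_ _ cv]; exact: (conn_restrict clos sub gmG cv).
    have symr : symmetric (fun s t => [&& s \in G, t \in G & dual_adj s t]).
      by move=> s t; rewrite dadj_sym; case: (s \in G); case: (t \in G).
    apply: connect_trans (cg w wG); rewrite (sym_connect_sym symr); exact: cg.
  + case => cyc /and3P[hall hs /andP[hc hu]].
    have hall' : all (fun s => s \in CT) cyc.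
      by apply/allP => s sc; move: (allP hall s sc); rewrite mcomp => /and3P[].
    exact: (sp_acyclic hT hall' hs hu hc).
- rewrite in_setD1 negb_and; apply/orP; right; apply/negP => /imsetP[s sIn e].
  have : gm \in comp CT gm by rewrite mcomp eq_sym m1 gmCT connect0.
  by rewrite e mcomp (negbTE gm_notC) andbF.
- apply/setP => X; rewrite in_setU1 in_setD1; apply/idP/idP.
  + case/imsetP => s sIn ->; move: (sIn); rewrite in_setD1 => /andP[ss sCT].
    case: (boolP (connect R' gm s)) => cgs.
      by rewrite -(comp_eq cgs) eqxx.
    have sg' : s != gm by apply: contraNneq cgs => ->; exact: connect0.
    have sd : s != dl by apply: contraNneq cgs => ->; exact: connect1 gmR.
    have : [&& s \in C, s != al & s != be] by move: sCT; rewrite CT1 (negbTE sg') (negbTE sd) !orbF.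
    case/and3P => sC sa sb.
    have nc : ~~ connect R al s.
      apply/negP => h; move: (connRM h); rewrite /phi eqxx /= (negbTE sa) (negbTE sb) /=.
      by rewrite (negbTE cgs).
    rewrite claimA //; apply/orP; right; apply/andP; split.
      apply/negP => /eqP e.
      have : al \in comp C s by rewrite e mcomp eq_sym n1 alC connect0.
      by rewrite mcomp => /and3P[_ _ h]; move: nc; rewrite conn_sym h.
    by apply/imsetP; exists s => //; rewrite in_setD1 ss sC.
  + case/orP => [/eqP->|/andP[nX]]; first by apply/imsetP; exists gm.
    case/imsetP => s sIn e; move: (sIn); rewrite in_setD1 => /andP[ss sC].
    have nc : ~~ connect R al s.
      by apply/negP => h; move: nX; rewrite e (comp_eq h) eqxx.
    have /andP[sa sb] := notX sC nc.
    rewrite e -claimA //; apply/imsetP; exists s => //.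
    by rewrite in_setD1 ss CT1 sC sa sb.
Qed.

End Main.

Unset Implicit Arguments.

Theorem corollary4p4 (V : finType) (S : {set {set V}}) (a b c d : V)
  (alphabar betabar sigma : {set V}) :
  stacked_sphere S ->
  [set a; b; c] \in S -> [set a; b; d] \in S -> c != d ->
  ~~ is_edge S c d ->
  alphabar \in sbar_tets S -> [set a; b; c] \subset alphabar ->
  betabar \in sbar_tets S -> [set a; b; d] \subset betabar ->
  sigma \in sbar_tets S -> dual_deg (sbar_tets S) sigma = 4 ->
  stacked_sphere (flip S a b c d) ->
  [/\ sigma \in sbar_tets (flip S a b c d),
      dual_deg (sbar_tets (flip S a b c d)) sigma = 4 &
      (exists2 G4, G4 \in comps_minus (sbar_tets S) sigma &
        [/\ alphabar \in G4, betabar \in G4 &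
          (exists G4', [/\ dual_tree G4', G4' \notin comps_minus (sbar_tets S) sigma :\ G4 &
            comps_minus (sbar_tets (flip S a b c d)) sigma =
            G4' |: (comps_minus (sbar_tets S) sigma :\ G4)])])].
Proof.
move=> hS habc habd ncd necd alC sal beC sbe sgC deg4 hT.
case: (exists_x hS habc alC) => x [xal xn].
split.
- exact: (sgCT hS habc habd ncd necd alC sal beC sbe sgC deg4 hT xal xn).
- exact: (deg_sg hS habc habd ncd necd alC sal beC sbe sgC deg4 hT xal xn).
- exact: (main_comp hS habc habd ncd necd alC sal beC sbe sgC deg4 hT xal xn).
Qed.
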